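(* Let $k\ge 2$ and let $p,q$ be real polynomials with $\deg p=k$, $\deg q=k-1$, whose roots are real, simple and strictly interlacing, $p_1<q_1<p_2<\dots<q_{k-1}<p_k$. Then every root $z$ of $W(p,q)=p'q-q'p$ satisfies $\left|z-\frac{p_1+p_k}{2}\right|\le\frac{p_k-p_1}{2}$.
   Context: Here $p_1<\dots<p_k$ are the roots of $p$ and $q_1<\dots<q_{k-1}$ the roots of $q$. *)

(* Defs.v *)
From HB Require Import structures.
From mathcomp Require Import all_boot all_order all_algebra.
Set Implicit Arguments. Unset Strict Implicit. Unset Printing Implicit Defensive.
Import Order.TTheory GRing.Theory Num.Theory.
Local Open Scope ring_scope.

Definition Wr (C : ringType) (p q : {poly C}) : {poly C} :=
  p^`() * q - q^`() * p.

(* Main.v *)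
From Stdlib Require Import Ring.
Require Import Defs.
From HB Require Import structures.
From mathcomp Require Import all_boot all_order all_algebra.
Import Order.TTheory GRing.Theory Num.Theory.
Local Open Scope ring_scope.

Section RingT.
Variable R : comNzRingType.
Definition radd (x y : R) : R := x + y.
Definition rmul (x y : R) : R := x * y.
Definition ropp (x : R) : R := - x.
Definition rsub (x y : R) : R := x - y.
Definition r0 : R := 0.
Definition r1 : R := 1.
Lemma Rth : @ring_theory R r0 r1 radd rmul rsub ropp eq.
Proof.
split; rewrite /r0/r1/radd/rmul/rsub/ropp; [exact: add0r|exact: addrC|exact: addrA|exact: mul1r|exact: mulrC|exact: mulrA|exact: mulrDl|done|exact: subrr].
Qed.
Add Ring Rr : Rth.

Lemma id1 (w u v s : R) :
  v * (w * (u - s)^+2) - u * (w * (v - s)^+2) = (u - v) * (w * (u * v - s^+2)).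
Proof.
rewrite !expr2.
have H : rsub (rmul v (rmul w (rmul (rsub u s) (rsub u s)))) (rmul u (rmul w (rmul (rsub v s) (rsub v s)))) = rmul (rsub u v) (rmul w (rsub (rmul u v) (rmul s s))) by ring.
exact: H.
Qed.

Lemma id2' (c L P L' P' : R) :
  (c * (L' * P + L * P')) * P - P' * (c * (L * P)) = c * (L' * (P * P)).
Proof.
have H : rsub (rmul (rmul c (radd (rmul L' P) (rmul L P'))) P) (rmul P' (rmul c (rmul L P))) = rmul c (rmul L' (rmul P P)) by ring.
exact: H.
Qed.

Lemma id3 (e x y z : R) : e * (x ^+ 2) * (y * z) ^+ 2 = e * (x * z) ^+ 2 * y ^+ 2.
Proof.
rewrite !expr2.
have H : rmul (rmul e (rmul x x)) (rmul (rmul y z) (rmul y z)) = rmul (rmul e (rmul (rmul x z) (rmul x z))) (rmul y y) by ring.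
exact: H.
Qed.

Lemma id4 (x y : R) : (x + y) - (y - x) = x + x.
Proof.
have H : rsub (radd x y) (rsub y x) = radd x x by ring. exact: H.
Qed.
Lemma id5 (x y : R) : (x + y) + (y - x) = y + y.
Proof.
have H : radd (radd x y) (rsub y x) = radd y y by ring. exact: H.
Qed.
End RingT.


Lemma sum_gt0 (R : numDomainType) n (F : 'I_n.+1 -> R) :
  (forall i, 0 < F i) -> 0 < \sum_i F i.
Proof.
move=> H; rewrite big_ord_recl; apply: ltr_wpDr; last exact: H.
by apply: sumr_ge0 => i _; apply: ltW.
Qed.

Lemma GL (C : numClosedFieldType) n (w s : 'I_n.+1 -> C) (u : C) :
  (forall i, 0 < w i) -> (forall i, s i \is Num.real) -> (forall i, `|s i| < `|u|) ->
  \sum_i w i * (u - s i) ^+ 2 != 0.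
Proof.
move=> wp sr su.
have sneq i : u - s i != 0.
  by rewrite subr_eq0; apply/eqP => E; move: (su i); rewrite -E ltxx.
case: (boolP (u \is Num.real)) => ur.
  apply: lt0r_neq0; apply: sum_gt0 => i; apply: mulr_gt0 => //.
  by rewrite real_exprn_even_gt0 ?rpredB // sneq orbT.
apply/eqP => H.
have H' : \sum_i w i * (u^* - s i) ^+ 2 = 0.
  have := congr1 Num.conj H; rewrite rmorph_sum rmorph0 => E. apply: (etrans _ E).
  apply: eq_bigr => i _.
  rewrite rmorphM rmorphXn rmorphB /=. by rewrite (conj_Creal (sr i)) (conj_Creal (gtr0_real (wp i))).
have uneq : u - u^* != 0.
  by rewrite subr_eq0 eq_sym -CrealE.
have : (u - u^*) * \sum_i w i * (u * u^* - s i ^+ 2) = 0.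
  transitivity (u^* * \sum_i w i * (u - s i) ^+ 2 - u * \sum_i w i * (u^* - s i) ^+ 2).
    rewrite !mulr_sumr -sumrB; apply: eq_bigr => i _.
    by rewrite id1.
  by rewrite H H' !mulr0 subrr.
move/eqP; rewrite mulf_eq0 (negbTE uneq) /=; apply/negP.
apply: lt0r_neq0; apply: sum_gt0 => i; apply: mulr_gt0 => //.
rewrite subr_gt0 -normCK -real_normK //.
by rewrite ltrXn2r.
Qed.
Lemma factor_lem (C : fieldType) (p : {poly C}) (s : seq C) :
  size p = (size s).+1 -> all (root p) s -> uniq s ->
  p = lead_coef p *: \prod_(x <- s) ('X - x%:P).
Proof.
move=> sp rs us.
have us' : uniq_roots s by rewrite uniq_rootsE.
have [r pr] := uniq_roots_prod_XsubC rs us'.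
have mon := monic_prod_XsubC s predT (fun x => x).
have r0 : r != 0 by apply: contra_eqN sp => /eqP r0; rewrite pr r0 mul0r size_poly0.
have : size r == 1%N.
  move: sp; rewrite pr size_Mmonic // size_prod_XsubC.
  by rewrite addnS /= => E; rewrite -(eqn_add2r (size s)) E add1n.
case/size_poly1P => c c0 rE.
by rewrite pr rE lead_coef_Mmonic // lead_coefC mul_polyC.
Qed.
Lemma Wr_add (C : comNzRingType) (p A B : {poly C}) (c : C) :
  Wr p (A + c *: B) = Wr p A + c *: Wr p B.
Proof.
rewrite /Wr derivD derivZ mulrDr mulrDl scalerBr -scalerAr -scalerAl.
by rewrite opprD addrACA.
Qed.

Lemma Wr_sum (C : comNzRingType) (p : {poly C}) n (c : 'I_n -> C) (F : 'I_n -> {poly C}) :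
  Wr p (\sum_i c i *: F i) = \sum_i c i *: Wr p (F i).
Proof.
elim: n c F => [|n IH] c F.
  by rewrite !big_ord0 /Wr deriv0 mul0r mulr0 subrr.
rewrite !big_ord_recr /= Wr_add IH //.
Qed.

Lemma WrP (C : comNzRingType) (c : C) (L P : {poly C}) :
  Wr (c *: (L * P)) P = c *: (L^`() * P ^+ 2).
Proof.
rewrite /Wr -!mul_polyC derivM derivC mul0r add0r derivM expr2.
exact: id2'.
Qed.

Theorem lemma1 (C : numClosedFieldType) (k : nat) (p q : {poly C})
    (ps qs : seq C) :
  (2 <= k)%N ->
  p \is a polyOver Num.real -> q \is a polyOver Num.real ->
  size p = k.+1 -> size q = k ->
  size ps = k -> size qs = k.-1 ->
  all (fun x => x \is Num.real) ps -> all (fun x => x \is Num.real) qs ->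
  all (root p) ps -> all (root q) qs ->
  (forall i, (i < k.-1)%N -> ps`_i < qs`_i /\ qs`_i < ps`_i.+1) ->
  forall z : C, root (Wr p q) z ->
    `|z - (ps`_0 + ps`_k.-1) / 2| <= (ps`_k.-1 - ps`_0) / 2.
Proof.
move=> hk pR qR sp sq sps sqs psR qsR rp rq hint z hz.
case: k hk sp sq sps sqs hint => [|n] // hk sp sq sps sqs hint.
rewrite /= in sqs hint *.
have aR i : (i < n.+1)%N -> ps`_i \is Num.real.
  by move=> hi; apply: (all_nthP 0 psR); rewrite sps.
have amono i j : (i < j)%N -> (j < n.+1)%N -> ps`_i < ps`_j.
  elim: j => // j IH; rewrite ltnS leq_eqVlt => /orP [/eqP -> | hij] hj.
    by case: (hint j hj) => h1 h2; apply: lt_trans h1 h2.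
  apply: lt_trans (IH hij (ltnW hj)) _.
  by case: (hint j hj) => h1 h2; apply: lt_trans h1 h2.
have ale i j : (i <= j)%N -> (j < n.+1)%N -> ps`_i <= ps`_j.
  rewrite leq_eqVlt => /orP [/eqP -> //| hij] hj.
  exact: ltW (amono i j hij hj).
have bltA j i : (j < i)%N -> (i < n.+1)%N -> qs`_j < ps`_i.
  move=> hji hi; have hj : (j < n)%N by apply: leq_trans hji _.
  case: (hint j hj) => _ h2; apply: lt_le_trans h2 _; exact: ale.
have altB i j : (i <= j)%N -> (j < n)%N -> ps`_i < qs`_j.
  move=> hij hj; case: (hint j hj) => h1 _; apply: le_lt_trans h1.
  by apply: ale => //; apply: ltnW.
have bmono j j' : (j < j')%N -> (j' < n)%N -> qs`_j < qs`_j'.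
  move=> hjj hj'; apply: lt_trans (bltA j j' hjj (ltnW hj')) _; exact: altB.
have ups : uniq ps.
  apply: contraT => /(uniqPn 0) [i [j [ij jn E]]].
  by move: (amono i j ij); rewrite -sps jn E ltxx => /(_ isT).
have uqs : uniq qs.
  apply: contraT => /(uniqPn 0) [i [j [ij jn E]]].
  by move: (bmono i j ij); rewrite -sqs jn E ltxx => /(_ isT).
set cp := lead_coef p.
set d := lead_coef q.
have pE : p = cp *: \prod_(i < n.+1) ('X - (ps`_i)%:P).
  have sp' : size p = (size ps).+1 by rewrite sps.
  have := @factor_lem _ p ps sp' rp ups; rewrite (big_nth 0) sps big_mkord //.
have qE : q = d *: \prod_(j < n) ('X - (qs`_j)%:P).
  have sq' : size q = (size qs).+1 by rewrite sqs.
  have := @factor_lem _ q qs sq' rq uqs; rewrite (big_nth 0) sqs big_mkord //.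
pose P (i : 'I_n.+1) := \prod_(l < n.+1 | l != i) ('X - (ps`_l)%:P).
have PiE (i : 'I_n.+1) : \prod_(l < n.+1) ('X - (ps`_l)%:P) = ('X - (ps`_i)%:P) * P i.
  by rewrite (bigD1 i).
have Pev (i : 'I_n.+1) (x : C) : (P i).[x] = \prod_(l < n.+1 | l != i) (x - ps`_l).
  by rewrite horner_prod; apply: eq_bigr => l _; rewrite hornerXsubC.
have Pa0 (i j : 'I_n.+1) : j != i -> (P i).[ps`_j] = 0.
  by move=> ji; rewrite Pev (bigD1 j) //= subrr mul0r.
have neqa (l i : 'I_n.+1) : l != i -> ps`_i - ps`_l != 0.
  move=> li; rewrite subr_eq0; case: (ltngtP l i) => h.
  - by rewrite gt_eqF // amono.
  - by rewrite lt_eqF // amono.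
  - by move: li; rewrite (val_inj h) eqxx.
have Pai (i : 'I_n.+1) : (P i).[ps`_i] != 0.
  by rewrite Pev; apply/prodf_neq0 => l li; exact: neqa.
have cp0 : cp != 0 by rewrite lead_coef_eq0 -size_poly_eq0 sp.
have sizeP (i : 'I_n.+1) : size (P i) = n.+1.
  have Pn0 : P i != 0 by apply: contraNneq (Pai i) => ->; rewrite horner0.
  have := sp; rewrite pE size_scale // (PiE i) mulrC size_Mmonic // ?monicXsubC //.
  by rewrite size_XsubC addn2 => -[].
pose cI (i : 'I_n.+1) := q.[ps`_i] / (P i).[ps`_i].
have qL : q = \sum_i cI i *: P i.
  apply/eqP; rewrite -subr_eq0; apply/negPn/negP => nz.
  have rts : all (root (q - \sum_i cI i *: P i)) ps.
    apply/(all_nthP 0) => j; rewrite sps => hj.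
    rewrite /root hornerD hornerN horner_sum (bigD1 (Ordinal hj)) //= hornerZ /cI divfK ?Pai //.
    rewrite big1 ?addr0 ?subrr // => l lj. by rewrite hornerZ (Pa0 l (Ordinal hj)) ?mulr0 // eq_sym.
  have := @max_poly_roots _ _ _ nz rts ups; rewrite sps.
  have : (size (q - \sum_i cI i *: P i)%R <= n.+1)%N.
    have h := size_polyD q (- \sum_i cI i *: P i). apply/(leq_trans h). rewrite geq_max size_opp sq leqnn /=.
    apply: (big_ind (fun x : {poly C} => size x <= n.+1)%N).
    - by rewrite size_poly0.
    - move=> x y hx hy; apply/(leq_trans (size_polyD x y)).
      by rewrite geq_max hx hy.
    - by move=> i _; rewrite -(sizeP i) size_scale_leq.
  by move=> h1; rewrite ltnNge h1.
have WE : Wr p q = \sum_i (cp * cI i) *: (P i ^+ 2).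
  rewrite {1}qL Wr_sum. apply: eq_big => // i _.
  rewrite {1}pE (PiE i) WrP derivXsubC mul1r scalerA mulrC //.
have hsum : \sum_i (d * cI i) * ((P i).[z]) ^+ 2 = 0.
  have : (Wr p q).[z] = cp * \sum_i cI i * (P i).[z] ^+ 2.
    rewrite WE horner_sum mulr_sumr.
    by under eq_bigr => i _ do rewrite hornerZ horner_exp -mulrA.
  move/eqP: hz => -> /esym/eqP; rewrite mulf_eq0 (negbTE cp0) /= => /eqP E.
  have := congr1 (fun x => d * x) E; rewrite /= mulr0 mulr_sumr => E2.
  apply: etrans _ E2; by under eq_bigr => i _ do rewrite -mulrA.
have q0 : q != 0 by rewrite -size_poly_eq0 sq.
have d0 : d != 0 by rewrite lead_coef_eq0.
have dR : d \is Num.real by rewrite /d lead_coefE; apply: (polyOverP qR).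
have PE2 (i : 'I_n.+1) : P i = \prod_(j < n) ('X - (ps`_(lift i j))%:P).
  apply: (mulfI (monic_neq0 (monicXsubC (ps`_i)))).
  by rewrite -PiE (bigD1_ord i).
have epos (i : 'I_n.+1) : 0 < d * cI i.
  have key : q.[ps`_i] * (P i).[ps`_i] =
      d * \prod_(j < n) ((ps`_i - qs`_j) * (ps`_i - ps`_(lift i j))).
    rewrite big_split /= mulrA; congr (_ * _).
      rewrite {1}qE hornerZ horner_prod; congr (_ * _).
      by under eq_bigr => j _ do rewrite hornerXsubC.
    rewrite PE2 horner_prod.
    by under eq_bigr => j _ do rewrite hornerXsubC.
  have pos : 0 < \prod_(j < n) ((ps`_i - qs`_j) * (ps`_i - ps`_(lift i j))).
    apply: prodr_gt0 => j _.
    case: (leqP i j) => hij.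
      have -> : (lift i j : nat) = j.+1 by rewrite /= /bump hij.
      rewrite -mulrNN !opprB mulr_gt0 // subr_gt0.
        exact: altB.
      by apply: amono => //; rewrite ltnS.
    have -> : (lift i j : nat) = j by rewrite /= /bump leqNgt hij.
    rewrite mulr_gt0 // subr_gt0.
      exact: bltA.
    exact: amono.
  have PR : (P i).[ps`_i] \is Num.real.
    by rewrite Pev; apply: rpred_prod => l _; rewrite rpredB // aR.
  have : 0 < d * cI i * ((P i).[ps`_i]) ^+ 2.
    rewrite /cI expr2 !mulrA divfK ?Pai // -mulrA key mulrA.
    by rewrite mulr_gt0 // -expr2 real_exprn_even_gt0 // d0.
  by rewrite pmulr_lgt0 // real_exprn_even_gt0 // Pai orbT.
set m := (ps`_0 + ps`_n) / 2.
set r := (ps`_n - ps`_0) / 2.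
have a0R := aR 0%N isT.
have anR : ps`_n \is Num.real by apply: aR.
have two0 : (2 : C) != 0 by rewrite pnatr_eq0.
have mR : m \is Num.real by rewrite /m rpredM ?rpredD ?rpredV ?rpred_nat.
have rR : r \is Num.real by rewrite /r rpredM ?rpredB ?rpredV ?rpred_nat.
have hmr : m - r = ps`_0.
  by rewrite /m /r -mulrBl id4 -mulr2n -[_ *+ 2]mulr_natr mulfK.
have hpr : m + r = ps`_n.
  by rewrite /m /r -mulrDl id5 -mulr2n -[_ *+ 2]mulr_natr mulfK.
have arange (i : 'I_n.+1) : `|ps`_i - m| <= r.
  rewrite real_ler_distl ?rpredB ?aR // hmr hpr.
  by rewrite !ale // -ltnS.
rewrite real_leNgt ?normr_real //; apply/negP => hlt.
have zneq (l : 'I_n.+1) : z - ps`_l != 0.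
  rewrite subr_eq0; apply/eqP => E; move: (arange l).
  by rewrite -E lt_geF.
have Pz0 (i : 'I_n.+1) : (P i).[z] != 0.
  by rewrite Pev; apply/prodf_neq0 => l _; exact: zneq.
have hs2 : \sum_i (d * cI i) * (((P i).[z])^*) ^+ 2 = 0.
  have := congr1 Num.conj hsum; rewrite rmorph_sum rmorph0 => E.
  apply: etrans _ E.
  under [RHS]eq_bigr => i _ do rewrite rmorphM rmorphXn /= (conj_Creal (gtr0_real (epos i))).
  by [].
have hs3 : \sum_i ((d * cI i) * ((P i).[z]^* * (P i).[z]) ^+ 2) *
     ((z - m) - (ps`_i - m)) ^+ 2 = 0.
  have := congr1 (fun x => x * (\prod_(l < n.+1) (z - ps`_l)) ^+ 2) hs2.
  rewrite /= mul0r mulr_suml => E; apply: etrans _ E.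
  under [RHS]eq_bigr => i _ do rewrite (bigD1 i) //= -Pev id3.
  by under eq_bigr => i _ do rewrite opprB addrA subrK.
move/eqP: hs3; apply/negP; apply: GL.
- move=> i; apply: mulr_gt0 => //; apply: exprn_gt0.
  by rewrite mulrC -normCK exprn_gt0 // normr_gt0.
- by move=> i; rewrite rpredB ?aR.
- by move=> i; apply: le_lt_trans (arange i) hlt.
Qed.
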